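(* Let $\phi$ be a reduced Boolean formula in the input variables $x_1,\dots,x_n$ and let $Q \subseteq [0,1]^n$ be a polytope such that $\phi(Q) \neq \emptyset$. Then $\phi(Q)$ is a polytope with extension complexity $\operatorname{xc}(\phi(Q)) \le |\phi| \operatorname{xc}(Q)$.
   Context: Boolean formulas are built from input variables $x_1,\dots,x_n$ using $\wedge$, $\vee$, $\neg$. A formula is reduced if negations are applied only to input variables. The size $|\phi|$ of a formula is the total number of occurrences of input variables in it. For a reduced formula $\phi$ and a convex set $Q \subseteq [0,1]^n$, the set $\phi(Q)$ is defined recursively: a non-negated variable $x_i$ is replaced by $\{x \in Q : x_i = 1\}$; a negated variable $\neg x_i$ by $\{x \in Q : x_i = 0\}$; a conjunction of two subformulas by the intersection of the corresponding sets; a disjunction by the convex hull of the union of the corresponding sets. An extended formulation of size $m$ of a polytope $P \subseteq \mathbb{R}^n$ consists of $T \in \mathbb{R}^{n\times d}$, $A \in \mathbb{R}^{m \times d}$, $t \in \mathbb{R}^n$, $b \in \mathbb{R}^m$ with $P = \{x : \exists y \in \mathbb{R}^d,\ Ay \ge b,\ x = Ty+t\}$; the extension complexity $\operatorname{xc}(P)$ is the smallest size of an extended formulation of $P$. *)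

(* Defs.v *)
From HB Require Import structures.
From mathcomp Require Import all_boot all_order all_algebra.
From mathcomp Require Import boolp classical_sets reals.
Set Implicit Arguments. Unset Strict Implicit. Unset Printing Implicit Defensive.
Import Order.TTheory GRing.Theory Num.Theory.
Local Open Scope classical_set_scope.
Local Open Scope ring_scope.

Inductive formula (n : nat) : Type :=
  | FVar of 'I_n
  | FNeg of formula n
  | FAnd of formula n & formula n
  | FOr of formula n & formula n.

Fixpoint reduced n (phi : formula n) : Prop :=
  match phi with
  | FVar _ => True
  | FNeg (FVar _) => True
  | FNeg _ => False
  | FAnd f g => reduced f /\ reduced g
  | FOr f g => reduced f /\ reduced g
  end.

Fixpoint fsize n (phi : formula n) : nat :=
  match phi with
  | FVar _ => 1
  | FNeg f => fsize f
  | FAnd f g => fsize f + fsize g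
  | FOr f g => fsize f + fsize g
  end.

Definition conv (R : realType) n (S : set 'cV[R]_n) : set 'cV[R]_n :=
  [set x | exists k (w : 'I_k -> R) (p : 'I_k -> 'cV[R]_n),
     (forall i, 0 <= w i) /\ \sum_(i < k) w i = 1 /\
     (forall i, S (p i)) /\ x = \sum_(i < k) w i *: p i].

(* phi(Q), defined for reduced formulas (the non-variable negation case is
   irrelevant for reduced formulas and set to the empty set). *)
Fixpoint phiQ (R : realType) n (phi : formula n) (Q : set 'cV[R]_n)
  : set 'cV[R]_n :=
  match phi with
  | FVar i => [set x | Q x /\ x i 0 = 1]
  | FNeg (FVar i) => [set x | Q x /\ x i 0 = 0]
  | FNeg _ => set0
  | FAnd f g => phiQ f Q `&` phiQ g Q
  | FOr f g => conv (phiQ f Q `|` phiQ g Q)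
  end.

Definition cube (R : realType) n : set 'cV[R]_n :=
  [set x | forall i, 0 <= x i 0 <= 1].

Definition polytope (R : realType) n (P : set 'cV[R]_n) : Prop :=
  exists k (p : 'I_k -> 'cV[R]_n), P = conv (range p).

Definition has_ef (R : realType) n (P : set 'cV[R]_n) (m : nat) : Prop :=
  exists (d : nat) (T : 'M[R]_(n, d)) (A : 'M[R]_(m, d))
         (t : 'cV[R]_n) (b : 'cV[R]_m),
    P = [set x | exists y : 'cV[R]_d,
                   (forall j, b j 0 <= (A *m y) j 0) /\ x = T *m y + t].

(* Extension complexity: the smallest size of an extended formulation
   (0 by convention if none exists, which does not happen for polytopes). *)
Definition xc (R : realType) n (P : set 'cV[R]_n) : nat :=
  match pselect (exists m, has_ef P m) with
  | left H => @ex_minn (fun m => `[< has_ef P m >])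
                 (let: ex_intro m Hm := H in ex_intro _ m (asboolT Hm))
  | right _ => 0%N
  end.

(* Main.v *)
Require Import Defs.
From HB Require Import structures.
From mathcomp Require Import all_boot all_order all_algebra.
From mathcomp Require Import boolp classical_sets reals.
From mathcomp Require Import lra ring.
Set Implicit Arguments. Unset Strict Implicit. Unset Printing Implicit Defensive.
Import Order.TTheory GRing.Theory Num.Theory.
Local Open Scope classical_set_scope.
Local Open Scope ring_scope.


Definition nonneg {R : realType} m (v : 'cV[R]_m) := forall j, 0 <= v j 0.
Definition sc {R : realType} d (c : 'rV[R]_d) (y : 'cV[R]_d) : R := (c *m y) 0 0.

Definition HFset {R : realType} n d e m (T : 'M[R]_(n,d)) (A : 'M[R]_(m,d))
  (E : 'M[R]_(e,d)) (c : 'rV[R]_d) : set 'cV[R]_n :=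
  [set x | exists y, nonneg (A *m y) /\ E *m y = 0 /\ sc c y = 1 /\ x = T *m y].
Definition HFgood {R : realType} n d e m (T : 'M[R]_(n,d)) (A : 'M[R]_(m,d))
  (E : 'M[R]_(e,d)) (c : 'rV[R]_d) : Prop :=
  forall y, nonneg (A *m y) -> E *m y = 0 -> 0 <= sc c y /\ (sc c y = 0 -> T *m y = 0).
Definition HF {R : realType} n (P : set 'cV[R]_n) m : Prop :=
  exists d e (T : 'M[R]_(n,d)) (A : 'M[R]_(m,d)) (E : 'M[R]_(e,d)) (c : 'rV[R]_d),
    P = HFset T A E c /\ HFgood T A E c.

Lemma scD {R : realType} d (c : 'rV[R]_d) y z : sc c (y + z) = sc c y + sc c z.
Proof. by rewrite /sc mulmxDr mxE. Qed.
Lemma scZ {R : realType} d (c : 'rV[R]_d) a y : sc c (a *: y) = a * sc c y.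
Proof. by rewrite /sc -scalemxAr mxE. Qed.
Lemma sc0 {R : realType} d (c : 'rV[R]_d) : sc c 0 = 0.
Proof. by rewrite /sc mulmx0 mxE. Qed.
Lemma sc_sum {R : realType} d (c : 'rV[R]_d) k (F : 'I_k -> 'cV_d) :
  sc c (\sum_(i < k) F i) = \sum_(i < k) sc c (F i).
Proof.
by rewrite /sc mulmx_sumr summxE.
Qed.

Lemma nonneg_sum {R : realType} m k (F : 'I_k -> 'cV[R]_m) :
  (forall i, nonneg (F i)) -> nonneg (\sum_(i < k) F i).
Proof.
move=> H j; rewrite summxE; apply: sumr_ge0 => i _; exact: H.
Qed.
Lemma nonnegZ {R : realType} m a (v : 'cV[R]_m) : 0 <= a -> nonneg v -> nonneg (a *: v).
Proof. by move=> ha hv j; rewrite mxE mulr_ge0. Qed.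
Lemma nonnegD {R : realType} m (v w : 'cV[R]_m) : nonneg v -> nonneg w -> nonneg (v + w).
Proof. by move=> hv hw j; rewrite mxE addr_ge0. Qed.

Lemma conv_mono {R : realType} n (S1 S2 : set 'cV[R]_n) : S1 `<=` S2 -> conv S1 `<=` conv S2.
Proof.
move=> H x [k [w [p [h1 [h2 [h3 h4]]]]]].
exists k, w, p; split => //; split => //; split => // i; exact: H.
Qed.

Lemma sub_conv {R : realType} n (S : set 'cV[R]_n) : S `<=` conv S.
Proof.
move=> x Sx; exists 1%N, (fun _ => 1), (fun _ => x).
by rewrite !big_ord1 scale1r; split => //; split.
Qed.

Lemma HFset_conv {R : realType} n d e m (T : 'M[R]_(n,d)) (A : 'M[R]_(m,d))
  (E : 'M[R]_(e,d)) (c : 'rV[R]_d) : conv (HFset T A E c) `<=` HFset T A E c.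
Proof.
move=> x [k [w [p [hw [hs [hp ->]]]]]].
have /choice [z hz] := hp.
exists (\sum_(i < k) w i *: z i); split.
  rewrite mulmx_sumr; apply: nonneg_sum => i; rewrite -scalemxAr.
  by apply: nonnegZ => //; case: (hz i).
split.
  rewrite mulmx_sumr; apply: big1 => i _; rewrite -scalemxAr.
  by case: (hz i) => _ [-> _]; rewrite scaler0.
split.
  rewrite sc_sum -hs; apply: eq_bigr => i _; rewrite scZ.
  by case: (hz i) => _ [_ [-> _]]; rewrite mulr1.
rewrite mulmx_sumr; apply: eq_bigr => i _; rewrite -scalemxAr.
by case: (hz i) => _ [_ [_ ->]].
Qed.


Lemma mx11_eq0 {R : realType} (M : 'M[R]_1) : M = 0 <-> M 0 0 = 0.
Proof.
split => [->|h]; first by rewrite mxE.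
by apply/matrixP => i j; rewrite !ord1 h mxE.
Qed.

Lemma mxBE {R : realType} k l (M N : 'M[R]_(k,l)) i j : (M - N) i j = M i j - N i j.
Proof. by rewrite !mxE. Qed.

Lemma col_mx_eq0P {R : realType} m1 m2 k (A : 'M[R]_(m1,k)) (B : 'M[R]_(m2,k)) :
  col_mx A B = 0 <-> A = 0 /\ B = 0.
Proof.
split => [h|[-> ->]]; last by rewrite col_mx0.
by move/eqP: h; rewrite col_mx_eq0 => /andP [/eqP -> /eqP ->].
Qed.

Lemma nonneg_col {R : realType} m1 m2 (u : 'cV[R]_m1) (v : 'cV[R]_m2) :
  nonneg (col_mx u v) <-> nonneg u /\ nonneg v.
Proof.
split => [h|[hu hv] j].
  split => j; [by have := h (lshift m2 j); rewrite col_mxEu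
              |by have := h (rshift m1 j); rewrite col_mxEd].
by rewrite -(splitK j); case: (split j) => k /=; rewrite ?col_mxEu ?col_mxEd.
Qed.

Lemma sc_row {R : realType} d1 d2 (c1 : 'rV[R]_d1) (c2 : 'rV[R]_d2) y1 y2 :
  sc (row_mx c1 c2) (col_mx y1 y2) = sc c1 y1 + sc c2 y2.
Proof. by rewrite /sc mul_row_col mxE. Qed.

Lemma HF_set0 {R : realType} n m : HF (@set0 'cV[R]_n) m.
Proof.
exists 0%N, 0%N, 0, 0, 0, 0; split.
  apply/seteqP; split => x //= [y [_ [_ [h _]]]].
  by move: h; rewrite /sc mul0mx mxE => /eqP; rewrite eq_sym oner_eq0.
by move=> y _ _; rewrite /sc !mul0mx mxE.
Qed.

Lemma HF_eq {R : realType} n (P : set 'cV[R]_n) m (i : 'I_n) (a : R) :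
  HF P m -> HF [set x | P x /\ x i 0 = a] m.
Proof.
move=> [d [e [T [A [E [c [-> hg]]]]]]].
exists d, (e + 1)%N, T, A, (col_mx E (row i T - a *: c)), c; split; last first.
  by move=> y hA; rewrite mul_col_mx => /col_mx_eq0P [hE _]; exact: hg.
have key y : ((row i T - a *: c) *m y) 0 0 = (T *m y) i 0 - a * sc c y.
  by rewrite /sc mulmxBl -scalemxAl -row_mul !mxE.
apply/seteqP; split => x /=.
  move=> [[y [hA [hE [hc ->]]]] hx]; exists y; split => //; split => //.
  rewrite mul_col_mx; apply/col_mx_eq0P; split => //.
  by apply/mx11_eq0; rewrite key hx hc mulr1 subrr.
move=> [y [hA [hE' [hc ->]]]]; move: hE'; rewrite mul_col_mx => /col_mx_eq0P [hE /mx11_eq0 h2].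
split; first by exists y.
by move: h2; rewrite key hc mulr1 => /eqP; rewrite subr_eq0 => /eqP.
Qed.

Lemma HF_and {R : realType} n (P1 P2 : set 'cV[R]_n) m1 m2 :
  HF P1 m1 -> HF P2 m2 -> HF (P1 `&` P2) (m1 + m2).
Proof.
move=> [d1 [e1 [T1 [A1 [E1 [c1 [-> hg1]]]]]]] [d2 [e2 [T2 [A2 [E2 [c2 [-> hg2]]]]]]].
exists (d1 + d2)%N, ((e1 + e2) + (n + 1))%N, (row_mx T1 0), (block_mx A1 0 0 A2),
  (col_mx (block_mx E1 0 0 E2) (col_mx (row_mx T1 (- T2)) (row_mx c1 (- c2)))),
  (row_mx c1 0).
have eA (y1 : 'cV[R]_d1) (y2 : 'cV[R]_d2) : block_mx A1 0 0 A2 *m col_mx y1 y2 = col_mx (A1 *m y1) (A2 *m y2).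
  by rewrite mul_block_col !mul0mx addr0 add0r.
have eE (y1 : 'cV[R]_d1) (y2 : 'cV[R]_d2) : block_mx E1 0 0 E2 *m col_mx y1 y2 = col_mx (E1 *m y1) (E2 *m y2).
  by rewrite mul_block_col !mul0mx addr0 add0r.
have eT (y1 : 'cV[R]_d1) (y2 : 'cV[R]_d2) : row_mx T1 (0 : 'M_(n, d2)) *m col_mx y1 y2 = T1 *m y1.
  by rewrite mul_row_col mul0mx; exact: addr0.
have ec (y1 : 'cV[R]_d1) (y2 : 'cV[R]_d2) : sc (row_mx c1 (0 : 'rV_d2)) (col_mx y1 y2) = sc c1 y1.
  by rewrite sc_row {2}/sc mul0mx mxE addr0.
split; last first.
  move=> y; rewrite -[y]vsubmxK eA eT ec mul_col_mx eE.
  move=> /nonneg_col [h1 _] /col_mx_eq0P [/col_mx_eq0P [h3 _] _]; exact: hg1.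
apply/seteqP; split => x /=.
  move=> [[y1 [hA1 [hE1 [hc1 ->]]]] [y2 [hA2 [hE2 [hc2 hx]]]]].
  exists (col_mx y1 y2); rewrite eA eT ec mul_col_mx eE mul_col_mx !mul_row_col.
  split; first by apply/nonneg_col.
  split => //; apply/col_mx_eq0P; split; first by apply/col_mx_eq0P.
  apply/col_mx_eq0P; split; first by rewrite mulNmx -hx subrr.
  by apply/mx11_eq0; rewrite mulNmx mxBE -/(sc c1 y1) -/(sc c2 y2) hc1 hc2 subrr.
move=> [y]; rewrite -[y]vsubmxK eA eT ec mul_col_mx eE mul_col_mx !mul_row_col.
move=> [/nonneg_col [h1 h2] [/col_mx_eq0P [/col_mx_eq0P [h3 h4]
   /col_mx_eq0P [h5 /mx11_eq0 h6]] [hc ->]]].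
split; first by exists (usubmx y).
exists (dsubmx y); split => //; split => //; split.
  by move: h6; rewrite mulNmx mxBE -/(sc _ _) -/(sc _ _) hc => /eqP; rewrite subr_eq0 => /eqP <-.
by apply/eqP; move: h5; rewrite mulNmx => /eqP; rewrite subr_eq0.
Qed.


Lemma conv2 {R : realType} n (S : set 'cV[R]_n) p q a b :
  S p -> S q -> 0 <= a -> 0 <= b -> a + b = 1 -> conv S (a *: p + b *: q).
Proof.
move=> Sp Sq ha hb hab.
exists 2%N, (fun i : 'I_2 => if val i == 0%N then a else b),
  (fun i : 'I_2 => if val i == 0%N then p else q).
split; first by move=> i; case: ifP.
split; first by rewrite big_ord_recr big_ord1 /=.
split; first by move=> i; case: ifP.
by rewrite big_ord_recr big_ord1 /=.
Qed.

Lemma HF_or {R : realType} n (P1 P2 : set 'cV[R]_n) m1 m2 :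
  HF P1 m1 -> HF P2 m2 -> HF (conv (P1 `|` P2)) (m1 + m2).
Proof.
move=> [d1 [e1 [T1 [A1 [E1 [c1 [-> hg1]]]]]]] [d2 [e2 [T2 [A2 [E2 [c2 [-> hg2]]]]]]].
exists (d1 + d2)%N, (e1 + e2)%N, (row_mx T1 T2), (block_mx A1 0 0 A2),
  (block_mx E1 0 0 E2), (row_mx c1 c2).
have eA (y1 : 'cV[R]_d1) (y2 : 'cV[R]_d2) :
  block_mx A1 0 0 A2 *m col_mx y1 y2 = col_mx (A1 *m y1) (A2 *m y2).
  by rewrite mul_block_col !mul0mx addr0 add0r.
have eE (y1 : 'cV[R]_d1) (y2 : 'cV[R]_d2) :
  block_mx E1 0 0 E2 *m col_mx y1 y2 = col_mx (E1 *m y1) (E2 *m y2).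
  by rewrite mul_block_col !mul0mx addr0 add0r.
have good : HFgood (row_mx T1 T2) (block_mx A1 0 0 A2) (block_mx E1 0 0 E2) (row_mx c1 c2).
  move=> y; rewrite -[y]vsubmxK eA eE sc_row mul_row_col.
  move=> /nonneg_col [h1 h2] /col_mx_eq0P [h3 h4].
  have [g1 g1'] := hg1 _ h1 h3; have [g2 g2'] := hg2 _ h2 h4.
  split; first exact: addr_ge0.
  move=> /eqP; rewrite paddr_eq0 // => /andP [/eqP /g1' -> /eqP /g2' ->].
  by rewrite addr0.
split => //.
apply/seteqP; split => x /=.
  apply: subset_trans (@HFset_conv _ _ _ _ _ _ _ _ _) _ => //.
  apply: conv_mono => {}x [[y [hA [hE [hc ->]]]]|[y [hA [hE [hc ->]]]]].
    exists (col_mx y 0); rewrite eA eE sc_row mul_row_col !mulmx0 sc0 addr0.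
    split; first by apply/nonneg_col; split => // j; rewrite mxE.
    by split; [rewrite hE col_mx0|split => //; rewrite addr0].
  exists (col_mx 0 y); rewrite eA eE sc_row mul_row_col !mulmx0 sc0 add0r.
  split; first by apply/nonneg_col; split => // j; rewrite mxE.
  by split; [rewrite hE col_mx0|split => //; rewrite add0r].
move=> [y]; rewrite -[y]vsubmxK eA eE sc_row mul_row_col.
set y1 := usubmx y; set y2 := dsubmx y.
move=> [/nonneg_col [h1 h2] [/col_mx_eq0P [h3 h4] [hc ->]]].
have [g1 g1'] := hg1 _ h1 h3; have [g2 g2'] := hg2 _ h2 h4.
have [l0|lpos] := eqVneq (sc c1 y1) 0.
  apply: sub_conv; right; rewrite (g1' l0) add0r; exists y2; split => //; split => //.
  by split => //; rewrite -hc l0 add0r.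
have [m0|mpos] := eqVneq (sc c2 y2) 0.
  apply: sub_conv; left; rewrite (g2' m0) addr0; exists y1; split => //; split => //.
  by split => //; rewrite -hc m0 addr0.
have l1 : 0 < sc c1 y1 by rewrite lt_def lpos g1.
have m1' : 0 < sc c2 y2 by rewrite lt_def mpos g2.
have -> : T1 *m y1 + T2 *m y2 =
  sc c1 y1 *: (T1 *m ((sc c1 y1)^-1 *: y1)) + sc c2 y2 *: (T2 *m ((sc c2 y2)^-1 *: y2)).
  by rewrite -!scalemxAr !scalerA !divff // !scale1r.
apply: conv2 => //; [left|right].
  exists ((sc c1 y1)^-1 *: y1); split; first by rewrite -scalemxAr; apply: nonnegZ => //; rewrite invr_ge0.
  by rewrite -!scalemxAr h3 scaler0 scZ mulVf.
exists ((sc c2 y2)^-1 *: y2); split; first by rewrite -scalemxAr; apply: nonnegZ => //; rewrite invr_ge0.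
by rewrite -!scalemxAr h4 scaler0 scZ mulVf.
Qed.


Lemma ker_param {R : realType} k d (F : 'M[R]_(k, d)) :
  exists N : 'M[R]_d, F *m N = 0 /\ forall v : 'cV[R]_d, F *m v = 0 -> exists z : 'cV[R]_d, v = N *m z.
Proof.
exists (kermx F^T)^T; split.
  by have := congr1 trmx (mulmx_ker F^T); rewrite trmx_mul trmxK trmx0.
move=> v hv.
have : (v^T <= kermx F^T)%MS by rewrite sub_kermx -trmx_mul hv trmx0.
move=> /submxP [D hD]; exists D^T.
by rewrite -[v]trmxK hD trmx_mul.
Qed.

Definition efset {R : realType} n d m (T : 'M[R]_(n,d)) (A : 'M[R]_(m,d)) (t : 'cV[R]_n) (b : 'cV[R]_m) :=
  [set x : 'cV[R]_n | exists y, (forall j, b j 0 <= (A *m y) j 0) /\ x = T *m y + t].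

Lemma HF_ef {R : realType} n (P : set 'cV[R]_n) m : HF P m -> P !=set0 ->
  exists d (T : 'M[R]_(n,d)) (A : 'M[R]_(m,d)) t b, P = efset T A t b /\
    (forall r : 'cV[R]_d, (forall j, 0 <= (A *m r) j 0) -> T *m r = 0).
Proof.
move=> [d [e [T [A [E [c [-> hg]]]]]]] [x0 [y0 [hA0 [hE0 [hc0 hx0]]]]].
have [N [hN1 hN2]] := ker_param (col_mx E c).
move: hN1; rewrite mul_col_mx => /col_mx_eq0P [EN cN].
exists d, (T *m N), (A *m N), (T *m y0), (- (A *m y0)); split.
  apply/seteqP; split => x /=.
    move=> [y [hA [hE [hc ->]]]].
    have [z hz] : exists z, y - y0 = N *m z.
      apply: hN2; rewrite mul_col_mx mulmxBr mulmxBr hE hE0 subrr.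
      apply/col_mx_eq0P; split => //; apply/mx11_eq0.
      by rewrite mxBE -/(sc c y) -/(sc c y0) hc hc0 subrr.
    exists z; split.
      move=> j; rewrite -mulmxA -hz mulmxBr mxBE mxE.
      by have := hA j; lra.
    by rewrite -mulmxA -hz mulmxBr subrK.
  move=> [z [hz ->]].
  exists (y0 + N *m z); split.
    move=> j; rewrite mulmxDr mulmxA mxE; have := hz j; rewrite mxE.
    by rewrite -subr_ge0 opprK addrC.
  split; first by rewrite mulmxDr mulmxA EN mul0mx addr0.
  split; first by rewrite scD hc0 /sc mulmxA cN mul0mx mxE addr0.
  by rewrite mulmxDr mulmxA addrC.
move=> r hr; rewrite -mulmxA.
have := hg (N *m r); rewrite mulmxA => /(_ hr); rewrite mulmxA EN mul0mx => /(_ erefl).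
by move=> [_ ]; apply; rewrite /sc mulmxA cN mul0mx mxE.
Qed.


Lemma conv_convex {R : realType} n (S : set 'cV[R]_n) x z a b :
  conv S x -> conv S z -> 0 <= a -> 0 <= b -> a + b = 1 -> conv S (a *: x + b *: z).
Proof.
move=> [k1 [w1 [p1 [hw1 [hs1 [hp1 ->]]]]]] [k2 [w2 [p2 [hw2 [hs2 [hp2 ->]]]]]] ha hb hab.
have hl : forall i, split (lshift k2 i) = inl i := fun i => unsplitK (inl i).
have hr : forall i, split (rshift k1 i) = inr i := fun i => unsplitK (inr i).
exists (k1 + k2)%N, (fun i => match split i with inl i => a * w1 i | inr i => b * w2 i end),
  (fun i => match split i with inl i => p1 i | inr i => p2 i end).
split; first by move=> i; case: (split i) => j; apply: mulr_ge0.
split.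
  rewrite big_split_ord /=.
  under [X in _ + X]eq_bigr do rewrite hr.
  under [X in X + _]eq_bigr do rewrite hl.
  by rewrite -!mulr_sumr hs1 hs2 !mulr1.
split; first by move=> i; case: (split i) => j.
rewrite big_split_ord /=.
under [X in _ = _ + X]eq_bigr do rewrite hr.
under [X in _ = X + _]eq_bigr do rewrite hl.
rewrite !scaler_sumr; congr (_ + _); apply: eq_bigr => i _; by rewrite scalerA.
Qed.

Lemma efset_conv {R : realType} n d m (T : 'M[R]_(n,d)) (A : 'M[R]_(m,d)) t b :
  conv (efset T A t b) `<=` efset T A t b.
Proof.
move=> x [k [w [p [hw [hs [hp ->]]]]]].
have /choice [z hz] := hp.
exists (\sum_(i < k) w i *: z i); split.
  move=> j; rewrite mulmx_sumr summxE.
  have -> : b j 0 = \sum_(i < k) w i * b j 0 by rewrite -mulr_suml hs mul1r.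
  apply: ler_sum => i _; rewrite -scalemxAr mxE; apply: ler_wpM2l => //.
  by case: (hz i).
have -> : t = \sum_(i < k) w i *: t by rewrite -scaler_suml hs scale1r.
rewrite mulmx_sumr -big_split /=; apply: eq_bigr => i _.
by case: (hz i) => _ ->; rewrite scalerDr scalemxAr.
Qed.

Definition tight {R : realType} d m (A : 'M[R]_(m,d)) (b : 'cV[R]_m) (y : 'cV[R]_d) : {set 'I_m} :=
  [set j | (A *m y) j 0 == b j 0].

Lemma move_step {R : realType} d m (A : 'M[R]_(m,d)) (b : 'cV[R]_m) (y r : 'cV[R]_d) :
  (forall j, b j 0 <= (A *m y) j 0) ->
  (forall j, j \in tight A b y -> (A *m r) j 0 = 0) ->
  (exists j, (A *m r) j 0 < 0) ->
  exists s, 0 < s /\ (forall j, b j 0 <= (A *m (y + s *: r)) j 0) /\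
     tight A b y \proper tight A b (y + s *: r).
Proof.
move=> hY hS [j0 hj0].
pose F j := ((A *m y) j 0 - b j 0) / (- (A *m r) j 0).
have Pj0 : (fun j => (A *m r) j 0 < 0) j0 by [].
case: (@arg_minP _ _ _ j0 (fun j => (A *m r) j 0 < 0) F hj0) => j1 hj1 hmin.
have notin j : (A *m r) j 0 < 0 -> (b j 0 < (A *m y) j 0).
  move=> hj; rewrite lt_def hY andbT; apply/negP => /eqP hb.
  have : j \in tight A b y by rewrite inE hb.
  by move/hS => h; move: hj; rewrite h ltxx.
have Fpos j : (A *m r) j 0 < 0 -> 0 < F j.
  move=> hj; rewrite /F divr_gt0 //; last by rewrite oppr_gt0.
  by rewrite subr_gt0; apply: notin.
have eAy s j : (A *m (y + s *: r)) j 0 = (A *m y) j 0 + s * (A *m r) j 0.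
  by rewrite mulmxDr -scalemxAr !mxE.
exists (F j1); split; first exact: Fpos.
split.
  move=> j; rewrite eAy.
  have [hj|hj] := ltP ((A *m r) j 0) 0.
    have hF : 0 <= F j1 by apply/ltW/Fpos.
    have : F j1 * - (A *m r) j 0 <= (A *m y) j 0 - b j 0.
      apply: le_trans (ler_wpM2r _ (hmin j hj)) _; first by rewrite oppr_ge0 ltW.
      by rewrite /F mulfVK // oppr_eq0 lt_eqF.
    rewrite mulrN; move: (F j1 * _) => u; lra.
  have := hY j; have : 0 <= F j1 * (A *m r) j 0 by rewrite mulr_ge0 // ltW // Fpos.
  move: (F j1 * _) => u; lra.
rewrite finset.properEneq; apply/andP; split.
  apply/eqP => heq.
  have : j1 \in tight A b (y + F j1 *: r).
    rewrite inE eAy /F invrN mulrN mulNr mulfVK; last by rewrite lt_eqF.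
    by rewrite opprB addrC subrK.
  rewrite -heq inE => /eqP hb.
  by have := notin j1 hj1; rewrite hb ltxx.
apply/fintype.subsetP => j; rewrite !inE eAy => /eqP hj.
rewrite hS ?inE ?hj //; by rewrite mulr0 addr0.
Qed.


Lemma ef_polytope {R : realType} n d m (T : 'M[R]_(n,d)) (A : 'M[R]_(m,d)) t b :
  (forall r : 'cV[R]_d, (forall j, 0 <= (A *m r) j 0) -> T *m r = 0) ->
  efset T A t b !=set0 -> polytope (efset T A t b).
Proof.
move=> hrec [x0 hx0].
pose Y (y : 'cV[R]_d) := forall j, b j 0 <= (A *m y) j 0.
pose Face (S : {set 'I_m}) (y : 'cV[R]_d) := Y y /\ (forall j, j \in S -> (A *m y) j 0 = b j 0).
pose const S := forall y1 y2, Face S y1 -> Face S y2 -> T *m y1 = T *m y2.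
pose pt (S : {set 'I_m}) : 'cV_n :=
  match pselect (exists y, Face S y /\ const S) with
  | left h => T *m (proj1_sig (cid h)) + t
  | right _ => x0 end.
pose p := fun i : 'I_#|{set 'I_m}| => pt (enum_val i).
exists #|{set 'I_m}|, p.
have ptin S : efset T A t b (pt S).
  rewrite /pt; case: pselect => // h.
  by case: (proj2_sig (cid h)) => [[hY _] _]; exists (proj1_sig (cid h)).
apply/seteqP; split; last first.
  apply: subset_trans (@efset_conv _ _ _ _ _ _ _ _) => //.
  by apply: conv_mono => x [i _ <-]; apply: ptin.
have main : forall k, forall (y : 'cV[R]_d), Y y -> (#|~: tight A b y| < k)%N ->
    conv (range p) (T *m y + t).
  elim => [|k IH] y hY hk; first by rewrite ltn0 in hk.
  have hF : Face (tight A b y) y by split => // j; rewrite inE => /eqP.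
  case: (pselect (const (tight A b y))) => hc.
    apply: sub_conv; exists (enum_rank (tight A b y)) => //; rewrite /p enum_rankK /pt.
    case: pselect => h; last by exfalso; apply: h; exists y.
    by case: (proj2_sig (cid h)) => hF' _; rewrite (hc _ _ hF' hF).
  have [y1 [y2 [f1 [f2 ne]]]] : exists y1 y2, Face (tight A b y) y1 /\
      Face (tight A b y) y2 /\ T *m y1 <> T *m y2.
    apply: contra_notP hc => H z1 z2 g1 g2; apply: contra_notP H => ne.
    by exists z1, z2.
  pose r := y2 - y1.
  have eAr j : (A *m r) j 0 = (A *m y2) j 0 - (A *m y1) j 0 by rewrite mulmxBr mxBE.
  have hS j : j \in tight A b y -> (A *m r) j 0 = 0.
    by move=> hj; rewrite eAr f1.2 // f2.2 // subrr.
  have Tr : T *m r <> 0 by rewrite mulmxBr => /eqP; rewrite subr_eq0 => /eqP /esym.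
  have neg1 : exists j, (A *m r) j 0 < 0.
    apply: contra_notP Tr => H; apply: hrec => j; rewrite leNgt; apply/negP => hj.
    by apply: H; exists j.
  have neg2 : exists j, (A *m (- r)) j 0 < 0.
    apply: contra_notP Tr => H; rewrite -[r]opprK mulmxN; apply/eqP; rewrite oppr_eq0.
    apply/eqP; apply: hrec => j; rewrite leNgt; apply/negP => hj.
    by apply: H; exists j.
  have hS' j : j \in tight A b y -> (A *m (- r)) j 0 = 0.
    by move=> hj; rewrite mulmxN mxE hS // oppr0.
  have [s1 [s1p [hY1 hP1]]] := move_step hY hS neg1.
  have [s2 [s2p [hY2 hP2]]] := move_step hY hS' neg2.
  rewrite ltnS in hk.
  have lt1 : (#|~: tight A b (y + s1 *: r)| < k)%N.
    by apply: leq_trans hk; apply: proper_card; rewrite properC.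
  have lt2 : (#|~: tight A b (y + s2 *: - r)| < k)%N.
    by apply: leq_trans hk; apply: proper_card; rewrite properC.
  have C1 := IH _ hY1 lt1; have C2 := IH _ hY2 lt2.
  have s12 : 0 < s1 + s2 by rewrite addr_gt0.
  have -> : T *m y + t = s2 / (s1 + s2) *: (T *m (y + s1 *: r) + t) +
      s1 / (s1 + s2) *: (T *m (y + s2 *: - r) + t).
    rewrite !mulmxDr -!scalemxAr mulmxN.
    move: (T *m y) (T *m r) => u v.
    apply/matrixP => i j; rewrite !mxE.
    field; by rewrite gt_eqF.
  apply: conv_convex => //; try by apply/ltW; rewrite divr_gt0.
  by rewrite -mulrDl addrC divff // gt_eqF.
move=> x [y [hy ->]]; exact: (main _ y hy (ltnSn _)).
Qed.


Lemma mxZE {R : realType} k l a (M : 'M[R]_(k,l)) i j : (a *: M) i j = a * M i j.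
Proof. by rewrite mxE. Qed.
Lemma mxDE {R : realType} k l (M N : 'M[R]_(k,l)) i j : (M + N) i j = M i j + N i j.
Proof. by rewrite mxE. Qed.
Lemma S1E {R : realType} k (v : 'cV[R]_k) : ((const_mx 1 : 'rV[R]_k) *m v) 0 0 = \sum_j v j 0.
Proof. by rewrite mxE; apply: eq_bigr => j _; rewrite mxE mul1r. Qed.

Lemma unit_vec {R : realType} k (j : 'I_k) : exists e : 'cV[R]_k,
  nonneg e /\ \sum_l e l 0 = 1 /\ forall (n : nat) (T : 'M[R]_(n,k)), T *m e = col j T.
Proof.
exists (delta_mx j 0); split; first by move=> l; rewrite mxE; case: eqP.
split; first by rewrite (bigD1 j) //= mxE !eqxx big1 ?addr0 // => l /negPf hl; rewrite mxE hl.
by move=> n T; rewrite colE.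
Qed.

Lemma polytope_HF {R : realType} n (Q : set 'cV[R]_n) : polytope Q -> exists k, HF Q k.
Proof.
move=> [k [p ->]].
pose T : 'M[R]_(n,k) := \matrix_(i, j) p j i 0.
have eT (w : 'cV[R]_k) : T *m w = \sum_j w j 0 *: p j.
  apply/matrixP => i l; rewrite !ord1 mxE summxE; apply: eq_bigr => j _.
  by rewrite !mxE mulrC.
exists k, k, 0%N, T, 1%:M, 0, (const_mx 1); split; last first.
  move=> w; rewrite mul1mx => hw _; rewrite /sc S1E; split; first exact: sumr_ge0.
  move=> /eqP; rewrite psumr_eq0 // => /allP h.
  rewrite eT big1 // => j _; have /eqP -> := h j (mem_index_enum _).
  by rewrite scale0r.
apply/seteqP; split.
  apply: subset_trans (@HFset_conv _ _ _ _ _ _ _ _ _) => //.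
  apply: conv_mono => x [j _ <-].
  have [e [he [hs hT]]] := @unit_vec R _ j.
  exists e; rewrite mul1mx; split => //; split; first by rewrite flatmx0.
  rewrite /sc S1E; split => //.
  rewrite hT; apply/matrixP => i l; rewrite !ord1 !mxE //.
move=> x [w [hw [_ [hs ->]]]]; rewrite mul1mx in hw.
exists k, (fun j => w j 0), p; split => //; split; first by rewrite -S1E.
by split; [move=> j; exists j|rewrite eT].
Qed.

Lemma real_bound {R : realType} (a k : R) :
  (forall s, 0 <= s -> 0 <= a + s * k <= 1) -> k = 0.
Proof.
move=> h; have := h 0 (lexx _); rewrite mul0r addr0 => /andP [a0 a1].
have [kn|kp|//] := ltgtP k 0.
  have s0 : 0 <= - 2 / k by apply: mulr_le0; [lra|rewrite invr_le0 ltW].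
  have := h _ s0; rewrite divfK ?lt_eqF // => /andP [h1 _]; lra.
have s0 : 0 <= 2 / k by apply: divr_ge0; [lra|rewrite ltW].
have := h _ s0; rewrite divfK ?gt_eqF // => /andP [_ h1]; lra.
Qed.

Lemma rec_cube {R : realType} n d m (T : 'M[R]_(n,d)) (A : 'M[R]_(m,d)) t b (z r : 'cV[R]_d) :
  efset T A t b `<=` @cube R n -> (forall j, b j 0 <= (A *m z) j 0) ->
  (forall j, 0 <= (A *m r) j 0) -> T *m r = 0.
Proof.
move=> hQ hz hr; apply/matrixP => i l; rewrite !ord1 [RHS]mxE.
apply: (@real_bound _ ((T *m z + t) i 0)) => s hs.
have : @cube R n (T *m (z + s *: r) + t).
  apply: hQ; exists (z + s *: r); split => // j.
  rewrite mulmxDr -scalemxAr mxDE mxZE.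
  by have := hz j; have := mulr_ge0 hs (hr j); lra.
move=> /(_ i); rewrite mulmxDr -scalemxAr !mxDE mxZE.
by rewrite mulrC addrAC.
Qed.


Lemma mxNE {R : realType} k l (M : 'M[R]_(k,l)) i j : (- M) i j = - M i j.
Proof. by rewrite mxE. Qed.
Lemma scalar_mx11 {R : realType} (a : R) : (a%:M : 'M[R]_1) 0 0 = a.
Proof. by rewrite mxE. Qed.

Lemma base_HF {R : realType} n (Q : set 'cV[R]_n) m :
  has_ef Q m -> polytope Q -> Q `<=` @cube R n ->
  (exists q1 q2, Q q1 /\ Q q2 /\ q1 <> q2) -> HF Q m.
Proof.
move=> [d [T [A [t [b hQ]]]]] hpol hcube [q1 [q2 [hq1 [hq2 hne]]]].
have hQ' : Q = efset T A t b := hQ.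
have hc' : efset T A t b `<=` @cube R n by rewrite -hQ'.
have [z1 [hz1 ez1]] : exists z, (forall j, b j 0 <= (A *m z) j 0) /\ q1 = T *m z + t.
  by move: hq1; rewrite hQ'.
have [z2 [hz2 ez2]] : exists z, (forall j, b j 0 <= (A *m z) j 0) /\ q2 = T *m z + t.
  by move: hq2; rewrite hQ'.
have rec r : (forall j, 0 <= (A *m r) j 0) -> T *m r = 0 := rec_cube hc' hz1.
pose A' := row_mx A (- b); pose T' := row_mx T t.
pose c : 'rV[R]_(d + 1) := row_mx 0 1.
have dec (y' : 'cV[R]_(d + 1)) : y' = col_mx (usubmx y') ((dsubmx y' 0 0)%:M).
  by rewrite -mx11_scalar vsubmxK.
have eA y a : A' *m col_mx y a%:M = A *m y - a *: b.
  by rewrite mul_row_col mul_mx_scalar scalerN.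
have eAj y a j : (A' *m col_mx y a%:M) j 0 = (A *m y) j 0 - a * b j 0.
  by rewrite eA mxBE mxZE.
have eT y a : T' *m col_mx y a%:M = T *m y + a *: t.
  by rewrite mul_row_col mul_mx_scalar.
have ec y a : sc c (col_mx y a%:M) = a.
  by rewrite sc_row /sc mul0mx mul1mx scalar_mx11 mxE add0r.
have sub e (E : 'M[R]_(e, d + 1)) : HFset T' A' E c `<=` Q.
  move=> x [y' [hA [_ [hc ->]]]]; move: hA hc; rewrite (dec y') ec => hA ha.
  move: hA; rewrite ha eT scale1r => hA; rewrite hQ'.
  exists (usubmx y'); split => // j; have := hA j; rewrite eAj mul1r subr_ge0 //.
have zero (y' : 'cV[R]_(d + 1)) : nonneg (A' *m y') -> sc c y' = 0 -> T' *m y' = 0.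
  rewrite (dec y') ec => hA ha; move: hA; rewrite ha eT scale0r addr0 => hA.
  apply: rec => j; have := hA j; by rewrite eAj mul0r subr0.
case: (pselect (exists r : 'cV[R]_d, (forall j, 0 <= (A *m r) j 0) /\ exists j, 0 < (A *m r) j 0)).
  move=> [r0 [hr0 [j0 hj0]]].
  move: hpol => [k [p hp]].
  have /choice [zf hzf] : forall i, exists z : 'cV[R]_d, (forall j, b j 0 <= (A *m z) j 0) /\ p i = T *m z + t.
    move=> i; have : Q (p i) by rewrite hp; apply: sub_conv; exists i.
    by rewrite hQ'.
  pose sl (z : 'cV[R]_d) := \sum_j ((A *m z) j 0 - b j 0).
  have sl_ge0 i : 0 <= sl (zf i).
    by apply: sumr_ge0 => j _; rewrite subr_ge0; case: (hzf i).
  pose M := 1 + \sum_i sl (zf i).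
  have Mge i : sl (zf i) <= M.
    rewrite /M (bigD1 i) //=.
    have : 0 <= \sum_(i0 | i0 != i) sl (zf i0) by apply: sumr_ge0.
    lra.
  have Mpos : 0 < M.
  have : 0 <= \sum_i sl (zf i) by apply: sumr_ge0 => i _; apply: sl_ge0.
  rewrite /M; lra.
  pose E := row_mx ((const_mx 1 : 'rV[R]_m) *m A) (- ((const_mx 1 : 'rV[R]_m) *m b) - M%:M).
  have eE y a : (E *m col_mx y a%:M) 0 0 = \sum_j ((A *m y) j 0 - a * b j 0) - a * M.
    rewrite mul_row_col -mulmxA mul_mx_scalar mxDE S1E mxZE mxBE mxNE S1E scalar_mx11.
    rewrite sumrB -mulr_sumr; ring.
  exists (d + 1)%N, 1%N, T', A', E, c; split; last first.
    move=> y'; rewrite (dec y') ec => hA /mx11_eq0; rewrite eE => hE.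
    split; last by move=> ha; apply: zero => //; rewrite ec.
    have : 0 <= \sum_j ((A *m usubmx y') j 0 - dsubmx y' 0 0 * b j 0).
      by apply: sumr_ge0 => j _; have := hA j; rewrite eAj.
    move: hE; move: (\sum_j _) => u hu hu0.
    have : 0 <= dsubmx y' 0 0 * M by lra.
    by rewrite pmulr_lge0.
  apply/seteqP; split; last exact: sub.
  rewrite hp; apply: subset_trans (@HFset_conv _ _ _ _ _ _ _ _ _) => //.
  apply: conv_mono => x [i _ <-].
  pose sl0 := \sum_j (A *m r0) j 0.
  have sl0pos : 0 < sl0.
    rewrite /sl0 (bigD1 j0) //=.
    have : 0 <= \sum_(i0 | i0 != j0) (A *m r0) i0 0 by apply: sumr_ge0.
    lra.
  pose s := (M - sl (zf i)) / sl0.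
  have s0 : 0 <= s by apply: divr_ge0; [have := Mge i; lra|exact: ltW].
  have eAy j : (A *m (zf i + s *: r0)) j 0 = (A *m zf i) j 0 + s * (A *m r0) j 0.
    by rewrite mulmxDr -scalemxAr mxDE mxZE.
  exists (col_mx (zf i + s *: r0) 1%:M); split.
    move=> j; rewrite eAj eAy mul1r; have := mulr_ge0 s0 (hr0 j).
    by case: (hzf i) => /(_ j) h _; lra.
  split.
    apply/mx11_eq0; rewrite eE.
    under eq_bigr do rewrite eAy mul1r.
    have -> : \sum_j ((A *m zf i) j 0 + s * (A *m r0) j 0 - b j 0) = sl (zf i) + s * sl0.
      rewrite /sl /sl0 mulr_sumr -big_split /=; apply: eq_bigr => j _; ring.
    rewrite /s divfK ?gt_eqF //; ring.
  split; first exact: ec.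
  rewrite eT scale1r mulmxDr -scalemxAr (rec r0 hr0) scaler0 addr0.
  by case: (hzf i).
move=> H.
exists (d + 1)%N, 0%N, T', A', 0, c; split; last first.
  move=> y' hA _; split; last exact: zero.
  move: hA; rewrite (dec y') ec; set y := usubmx y'; set a := dsubmx y' 0 0 => hA.
  rewrite leNgt; apply/negP => aneg.
  have key (z : 'cV[R]_d) : (forall j, b j 0 <= (A *m z) j 0) ->
      forall j, (A *m z) j 0 + (- a)^-1 * (A *m y) j 0 = 0.
    move=> hz.
    have nn : forall j, 0 <= (A *m (z + (- a)^-1 *: y)) j 0.
      move=> j; rewrite mulmxDr -scalemxAr mxDE mxZE.
      have := hA j; rewrite eAj => h1; have := hz j => h2.
      have : (- a)^-1 * (a * b j 0) <= (- a)^-1 * (A *m y) j 0.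
        by apply: ler_wpM2l; [rewrite invr_ge0 oppr_ge0 ltW | rewrite -subr_ge0].
      rewrite mulrA invrN !mulNr mulVf ?lt_eqF // mul1r; move: (a^-1 * _) => u; lra.
    case: (pselect (exists j, 0 < (A *m (z + (- a)^-1 *: y)) j 0)) => [hex|hnex] j.
      by exfalso; apply: H; exists (z + (- a)^-1 *: y); split.
    have := nn j; rewrite le_eqVlt => /orP [/eqP h0|hlt].
      by move: h0; rewrite mulmxDr -scalemxAr mxDE mxZE => <-.
    by exfalso; apply: hnex; exists j.
  apply: hne; rewrite ez1 ez2; congr (_ + _); apply/eqP; rewrite -subr_eq0 -mulmxBr.
  apply/eqP; apply: rec => j; rewrite mulmxBr mxBE.
  have := key _ hz1 j; have := key _ hz2 j; lra.
apply/seteqP; split; last exact: sub.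
move=> x; rewrite hQ' => [[y [hy ->]]].
exists (col_mx y 1%:M); split.
  by move=> j; rewrite eAj mul1r subr_ge0.
split; first by rewrite flatmx0.
by split; [exact: ec|rewrite eT scale1r].
Qed.


Lemma xc_le {R : realType} n (P : set 'cV[R]_n) m : has_ef P m -> (xc P <= m)%N.
Proof.
move=> h; rewrite /xc; case: pselect => [H|H]; last by exfalso; apply: H; exists m.
case: H => m0 hm0 /=; case: ex_minnP => k _ hk; apply: hk; exact/asboolP.
Qed.

Lemma xc_spec {R : realType} n (P : set 'cV[R]_n) : (exists m, has_ef P m) -> has_ef P (xc P).
Proof.
move=> h; rewrite /xc; case: pselect => [H|//].
case: H => m0 hm0 /=; case: ex_minnP => k hk _; exact/asboolP.
Qed.

Lemma HF_has_ef {R : realType} n (P : set 'cV[R]_n) m : HF P m -> P !=set0 -> has_ef P m.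
Proof.
move=> h hn; have [d [T [A [t [b [-> _]]]]]] := HF_ef h hn.
by exists d, T, A, t, b.
Qed.

Lemma HF_phi {R : realType} n (Q : set 'cV[R]_n) m (phi : formula n) :
  HF Q m -> HF (phiQ phi Q) (fsize phi * m).
Proof.
move=> hQ; elim: phi => [i|f IH|f IHf g IHg|f IHf g IHg] /=.
- by rewrite mul1n; apply: HF_eq.
- case: f IH => [i|f'|f' g'|f' g'] _ /=; try exact: HF_set0.
  by rewrite mul1n; apply: HF_eq.
- by rewrite mulnDl; apply: HF_and.
- by rewrite mulnDl; apply: HF_or.
Qed.

Lemma fsize_gt0 n (phi : formula n) : (0 < fsize phi)%N.
Proof. by elim: phi => //= f hf g hg; rewrite addn_gt0 hf. Qed.

Lemma conv_single {R : realType} n (S : set 'cV[R]_n) q x :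
  (forall y, S y -> y = q) -> conv S x -> x = q.
Proof.
move=> h [k [w [p [_ [hs [hp ->]]]]]].
under eq_bigr do rewrite (h _ (hp _)).
by rewrite -scaler_suml hs scale1r.
Qed.

Lemma phiQ_sub {R : realType} n (Q : set 'cV[R]_n) (phi : formula n) :
  (forall S, S `<=` Q -> conv S `<=` Q) -> phiQ phi Q `<=` Q.
Proof.
move=> hc; elim: phi => [i|f IH|f IHf g IHg|f IHf g IHg] /=.
- by move=> x [].
- by case: f IH => [i|f'|f' g'|f' g'] _ //= x [].
- by move=> x [/IHf].
- by apply: hc => x [/IHf|/IHg].
Qed.

Unset Implicit Arguments.
Theorem proposition4p2 (R : realType) (n : nat) (phi : formula n)
  (Q : set 'cV[R]_n) :
  reduced phi -> polytope Q -> Q `<=` @cube R n ->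
  phiQ phi Q !=set0 ->
  polytope (phiQ phi Q) /\ (xc (phiQ phi Q) <= fsize phi * xc Q)%N.
Proof.
move=> _ hpol hcube hne.
case: (pselect (exists q1 q2, Q q1 /\ Q q2 /\ q1 <> q2)) => [H2|H1].
  have Qne : Q !=set0 by case: H2 => q1 [q2 [h _]]; exists q1.
  have hef : has_ef Q (xc Q).
    apply: xc_spec; have [k hk] := polytope_HF hpol.
    by exists k; apply: HF_has_ef.
  have hHF := HF_phi phi (base_HF hef hpol hcube H2).
  have [d [T [A [t [b [heq hrec]]]]]] := HF_ef hHF hne.
  split; first by rewrite heq; apply: ef_polytope => //; rewrite -heq.
  by apply: xc_le; exists d, T, A, t, b.
have single : forall q1 q2, Q q1 -> Q q2 -> q1 = q2.
  move=> q1 q2 h1 h2; apply: contra_notP H1 => ne; by exists q1, q2.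
have hsub : phiQ phi Q `<=` Q.
  apply: phiQ_sub => S hS x hx; case: hx => k [w [p [h1 [h2 [h3 h4]]]]].
  have := h3; case: k w p h1 h2 h3 h4 => [|k] w p h1 h2 h3 h4 _.
    by move: h2; rewrite big_ord0 => /eqP; rewrite eq_sym oner_eq0.
  have q0 := hS _ (h3 ord0).
  rewrite (@conv_single _ _ S (p ord0) x) //.
    by move=> y /hS hy; apply: single.
  by exists k.+1, w, p.
have -> : phiQ phi Q = Q.
  apply/seteqP; split => // y hy; case: hne => x hx.
  by rewrite (single y x hy (hsub _ hx)).
split => //; rewrite -[X in (X <= _)%N]mul1n leq_mul2r fsize_gt0 orbT //.
Qed.
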